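(* For every integer $d\ge 2$, $\mathcal Q_d$ is an open subset of $\mathcal C_d$ (and hence of $\mathcal A_d$).
   Context: A polynomial knot is a map $\phi:\mathbb R\to\mathbb R^3$ with real polynomial components which is a smooth embedding ($\phi$ injective and $\phi'(t)\ne0$ for all $t$). For $d\ge2$, $\mathcal A_d$ is the set of polynomial maps $t\mapsto(f(t),g(t),h(t))$ with $\deg f\le d-2$, $\deg g\le d-1$, $\deg h\le d$, topologized via the bijection with Euclidean $\mathbb R^{3d}$ sending $(f,g,h)$ to its coefficient vector $(a_0,\dots,a_{d-2},b_0,\dots,b_{d-1},c_0,\dots,c_d)$, where $f=\sum a_it^i$, $g=\sum b_it^i$, $h=\sum c_it^i$. $\mathcal C_d\subseteq\mathcal A_d$ is the subspace of maps with $\deg f=d-2$, $\deg g=d-1$, $\deg h=d$ exactly, and $\mathcal Q_d$ is the set of polynomial knots in $\mathcal C_d$. *)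

(* Defs.v *)
From Stdlib Require Import Reals.
Open Scope R_scope.

(* A point of A_d is represented by three coefficient sequences (a, b, c);
   only a_0..a_{d-2}, b_0..b_{d-1}, c_0..c_d matter. *)

Definition peval (a : nat -> R) (n : nat) (t : R) : R :=
  sum_f_R0 (fun i => a i * t ^ i) n.

Definition phiX (d : nat) (a : nat -> R) := peval a (d - 2).
Definition phiY (d : nat) (b : nat -> R) := peval b (d - 1).
Definition phiZ (d : nat) (c : nat -> R) := peval c d.

Definition inC (d : nat) (a b c : nat -> R) : Prop :=
  a (d - 2)%nat <> 0 /\ b (d - 1)%nat <> 0 /\ c d <> 0.

Definition is_poly_knot (d : nat) (a b c : nat -> R) : Prop :=
  (forall s t : R,
     phiX d a s = phiX d a t -> phiY d b s = phiY d b t ->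
     phiZ d c s = phiZ d c t -> s = t) /\
  (forall t : R, exists l1 l2 l3 : R,
     derivable_pt_lim (phiX d a) t l1 /\
     derivable_pt_lim (phiY d b) t l2 /\
     derivable_pt_lim (phiZ d c) t l3 /\
     ~ (l1 = 0 /\ l2 = 0 /\ l3 = 0)).

Definition inQ (d : nat) (a b c : nat -> R) : Prop :=
  inC d a b c /\ is_poly_knot d a b c.

(* (a',b',c') lies in the eps-ball (sup norm on R^{3d}, which induces the
   Euclidean topology) around (a,b,c) *)
Definition close (d : nat) (eps : R) (a b c a' b' c' : nat -> R) : Prop :=
  (forall i, (i <= d - 2)%nat -> Rabs (a' i - a i) < eps) /\
  (forall i, (i <= d - 1)%nat -> Rabs (b' i - b i) < eps) /\
  (forall i, (i <= d)%nat -> Rabs (c' i - c i) < eps).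

(* Main.v *)
Require Import Defs.
From Stdlib Require Import Reals Lra Lia Psatz ClassicalEpsilon.
Open Scope R_scope.

Fixpoint P (k : nat) (s t : R) : R :=
  match k with O => 0 | S k => s ^ k + t * P k s t end.

Lemma P_id k s t : (s - t) * P k s t = s ^ k - t ^ k.
Proof. induction k; simpl. ring. replace ((s - t) * (s ^ k + t * P k s t)) with ((s-t)*s^k + t*((s-t)*P k s t)) by ring. rewrite IHk. ring. Qed.

Lemma P_sym k s t : P k s t = P k t s.
Proof.
  destruct (Req_dec s t) as [->|H]; [reflexivity|].
  apply (Rmult_eq_reg_l (s - t)); [|lra].
  rewrite P_id. replace ((s - t) * P k t s) with (- ((t - s) * P k t s)) by ring.
  rewrite P_id. ring.
Qed.

Lemma P_diag k t : P k t t = INR k * t ^ pred k.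
Proof. induction k; simpl. ring. rewrite IHk. destruct k; simpl. ring. replace (match k with 0%nat => 1 | S _ => INR k + 1 end) with (INR (S k)) by reflexivity. rewrite S_INR. ring. Qed.

Lemma P_hom k l x y : P (S k) (l * x) (l * y) = l ^ k * P (S k) x y.
Proof. induction k. simpl. ring.
  change (P (S (S k)) (l*x) (l*y)) with ((l*x)^(S k) + (l*y) * P (S k) (l*x) (l*y)).
  rewrite IHk. change (P (S (S k)) x y) with (x^(S k) + y * P (S k) x y).
  rewrite Rpow_mult_distr. simpl. ring. Qed.

Lemma P_bound k s t R : 0 <= R -> Rabs s <= R -> Rabs t <= R -> Rabs (P k s t) * R <= INR k * R ^ k.
Proof. intros HR Hs Ht. induction k. simpl. rewrite Rabs_R0. lra.
  simpl P. rewrite S_INR.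
  assert (H1 : Rabs (s ^ k + t * P k s t) <= Rabs s ^ k + Rabs t * Rabs (P k s t)).
  { rewrite RPow_abs, <- Rabs_mult. apply Rabs_triang. }
  assert (H2 : Rabs s ^ k <= R ^ k) by (apply pow_incr; split; [apply Rabs_pos|lra]).
  assert (H3 : Rabs t * Rabs (P k s t) <= Rabs (P k s t) * R) by (rewrite Rmult_comm; apply Rmult_le_compat_l; [apply Rabs_pos|lra]).
  simpl. apply Rle_trans with ((R^k + INR k * R^k) * R). apply Rmult_le_compat_r; lra. right; ring.
Qed.

Lemma P_bound1 k s t R : 1 <= R -> Rabs s <= R -> Rabs t <= R -> Rabs (P k s t) <= INR k * R ^ k.
Proof. intros. apply Rle_trans with (Rabs (P k s t) * R); [|apply P_bound; auto; lra].
  rewrite <- (Rmult_1_r (Rabs _)) at 1. apply Rmult_le_compat_l; [apply Rabs_pos|lra]. Qed.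

Lemma P_lip1 k s s' t R : 1 <= R -> Rabs s <= R -> Rabs s' <= R -> Rabs t <= R ->
  Rabs (P k s t - P k s' t) <= INR k * INR k * R ^ k * Rabs (s - s').
Proof. intros HR Hs Hs' Ht. induction k. simpl. replace (0-0) with 0 by ring. rewrite Rabs_R0. lra.
  simpl P.
  replace (s ^ k + t * P k s t - (s' ^ k + t * P k s' t)) with ((s - s') * P k s s' + t * (P k s t - P k s' t))
    by (rewrite P_id; ring).
  eapply Rle_trans. apply Rabs_triang. rewrite !Rabs_mult.
  pose proof (P_bound1 k s s' R HR Hs Hs') as B1.
  assert (Hk : 0 <= INR k) by apply pos_INR.
  assert (HRk : 1 <= R ^ k) by (apply pow_R1_Rle; lra).
  pose proof (Rabs_pos (s - s')). pose proof (Rabs_pos t). pose proof (Rabs_pos (P k s s')).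
  pose proof (Rabs_pos (P k s t - P k s' t)).
  rewrite S_INR. simpl pow.
  apply Rle_trans with (Rabs (s - s') * (INR k * R ^ k) + R * (INR k * INR k * R ^ k * Rabs (s - s'))).
  apply Rplus_le_compat. apply Rmult_le_compat_l; lra.
  apply Rmult_le_compat; lra.
  assert (0 <= INR k * R^k * Rabs (s - s') * (R - 1)) by (repeat apply Rmult_le_pos; lra).
  assert (0 <= INR k * INR k * R^k * Rabs (s - s') ) by (repeat apply Rmult_le_pos; lra).
  assert (0 <= R ^ k * Rabs (s - s') ) by (repeat apply Rmult_le_pos; lra).
  nra.
Qed.

Lemma P_lip k s s' t t' R : 1 <= R -> Rabs s <= R -> Rabs s' <= R -> Rabs t <= R -> Rabs t' <= R ->
  Rabs (P k s t - P k s' t') <= INR k * INR k * R ^ k * (Rabs (s - s') + Rabs (t - t')).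
Proof. intros.
  replace (P k s t - P k s' t') with ((P k s t - P k s' t) + (P k t s' - P k t' s')) by (rewrite (P_sym k s' t), (P_sym k s' t'); ring).
  eapply Rle_trans. apply Rabs_triang. rewrite Rmult_plus_distr_l.
  apply Rplus_le_compat; apply P_lip1; auto.
Qed.

Lemma P_pos_ge1 k u : 0 <= u -> 1 <= P (S k) 1 u.
Proof. intros Hu. induction k. simpl. lra. change (P (S (S k)) 1 u) with (1 ^ (S k) + u * P (S k) 1 u).
  rewrite pow1. assert (0 <= u * P (S k) 1 u) by (apply Rmult_le_pos; lra). lra. Qed.

Lemma pow_odd_neg j u : u <= 0 -> u ^ (S (2 * j)) <= 0.
Proof. intros Hu. rewrite <- tech_pow_Rmult, pow_mult. assert (0 <= (u ^ 2) ^ j) by (apply pow_le; nra). nra. Qed.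

Lemma pow_even_abs j s : s ^ (2 * j) = Rabs s ^ (2 * j).
Proof. rewrite !pow_mult. f_equal. simpl. rewrite !Rmult_1_r. rewrite <- Rabs_mult. rewrite Rabs_right; [|nra]. ring. Qed.

Lemma P_odd_1 j u : -1 <= u <= 1 -> 1/2 <= P (S (2 * j)) 1 u.
Proof. intros Hu. destruct (Rle_dec 0 u). pose proof (P_pos_ge1 (2*j) u r). lra.
  pose proof (P_id (S (2*j)) 1 u) as E. rewrite pow1 in E. pose proof (pow_odd_neg j u ltac:(lra)). nra. Qed.

Lemma P_odd_lower_aux j s t : Rabs t <= Rabs s -> Rabs s ^ (2 * j) / 2 <= P (S (2 * j)) s t.
Proof. intros H.
  destruct (Req_dec s 0) as [->|Hs0].
  { rewrite Rabs_R0 in *. assert (t = 0) by (pose proof (Rabs_pos t); destruct (Req_dec t 0); auto; pose proof (Rabs_pos_lt t); lra). subst.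
    destruct j. simpl. lra. rewrite pow_i by lia. simpl. rewrite pow_i by lia. lra. }
  replace t with (s * (t / s)) by (field; auto).
  replace s with (s * 1) at 2 by ring.
  rewrite P_hom. rewrite <- pow_even_abs.
  assert (-1 <= t / s <= 1).
  { assert (Rabs (t / s) <= 1).
    { unfold Rdiv. rewrite Rabs_mult, Rabs_inv.
    apply Rmult_le_reg_r with (Rabs s). apply Rabs_pos_lt; auto.
    rewrite Rmult_assoc, Rinv_l. lra. apply Rabs_no_R0; auto. }
    revert H0. unfold Rabs. destruct Rcase_abs; lra. }
  pose proof (P_odd_1 j (t/s) H0).
  assert (0 <= s ^ (2*j)) by (rewrite pow_even_abs; apply pow_le, Rabs_pos).
  nra.
Qed.

Lemma P_odd_lower j s t : Rmax (Rabs s) (Rabs t) ^ (2 * j) / 2 <= P (S (2 * j)) s t.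
Proof.
  destruct (Rle_dec (Rabs t) (Rabs s)).
  rewrite Rmax_left by lra. apply P_odd_lower_aux; auto.
  rewrite Rmax_right by lra. rewrite P_sym. apply P_odd_lower_aux; lra.
Qed.

Definition DD (a : nat -> R) (n : nat) (s t : R) : R := sum_f_R0 (fun k => a k * P k s t) n.

Lemma DD_id a n s t : (s - t) * DD a n s t = peval a n s - peval a n t.
Proof. unfold DD, peval. induction n; simpl.
  - replace (t ^ 0) with 1 by reflexivity. replace (s ^ 0) with 1 by reflexivity. ring.
  - rewrite Rmult_plus_distr_l, IHn. rewrite Rmult_comm, Rmult_assoc, (Rmult_comm _ (s - t)).
    replace (s ^ n + t * P n s t) with (P (S n) s t) by reflexivity. rewrite P_id. simpl. ring.
Qed.

Lemma DD_sym a n s t : DD a n s t = DD a n t s.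
Proof. unfold DD. apply sum_eq. intros. rewrite P_sym. reflexivity. Qed.

Lemma DD_lin a a' n s t : DD a' n s t - DD a n s t = DD (fun k => a' k - a k) n s t.
Proof. unfold DD. induction n; simpl. ring. rewrite <- IHn. ring. Qed.

Lemma DD_deriv a n t : derivable_pt_lim (peval a n) t (DD a n t t).
Proof. unfold DD, peval. induction n.
  - simpl. replace (a 0%nat * 0) with 0 by ring.
    change (derivable_pt_lim (fun _ => a 0%nat * 1) t 0). apply derivable_pt_lim_const.
  - change (derivable_pt_lim ((fun t => sum_f_R0 (fun i => a i * t ^ i) n) + mult_real_fct (a (S n)) (fun y => y ^ (S n))) t
      (sum_f_R0 (fun k => a k * P k t t) n + a (S n) * P (S n) t t)).
    apply derivable_pt_lim_plus; auto.
    rewrite P_diag. apply derivable_pt_lim_scal. apply derivable_pt_lim_pow.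
Qed.

Lemma coef_le_sum a n k : (k <= n)%nat -> Rabs (a k) <= sum_f_R0 (fun i => Rabs (a i)) n.
Proof. induction n; intros H; simpl.
  - replace k with 0%nat by lia. lra.
  - destruct (Nat.eq_dec k (S n)) as [->|]. pose proof (cond_pos_sum (fun i => Rabs (a i)) n (fun i => Rabs_pos _)). lra.
    pose proof (IHn ltac:(lia)). pose proof (Rabs_pos (a (S n))). lra.
Qed.

Lemma DD_boundR a n s t R w : 1 <= R -> Rabs s <= R -> Rabs t <= R ->
  (forall k, (k <= n)%nat -> Rabs (a k) <= w) ->
  Rabs (DD a n s t) * R <= w * INR (S n) * INR n * R ^ n.
Proof. intros HR Hs Ht Hw. unfold DD. induction n; [simpl|rewrite tech5].
  - rewrite Rmult_0_r, Rabs_R0. lra.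
  - assert (Hw0 : 0 <= w) by (pose proof (Hw 0%nat ltac:(lia)); pose proof (Rabs_pos (a 0%nat)); lra).
    pose proof (IHn (fun k Hk => Hw k ltac:(lia))) as IH.
    pose proof (P_bound (S n) s t R ltac:(lra) Hs Ht) as PB.
    pose proof (Hw (S n) (le_n _)) as HwS.
    assert (Habs : Rabs (sum_f_R0 (fun k => a k * P k s t) n + a (S n) * P (S n) s t) * R <=
      Rabs (sum_f_R0 (fun k => a k * P k s t) n) * R + Rabs (a (S n)) * (Rabs (P (S n) s t) * R)).
    { rewrite <- Rmult_assoc, <- Rabs_mult, <- Rmult_plus_distr_r. apply Rmult_le_compat_r. lra. apply Rabs_triang. }
    assert (HRn : R ^ n <= R * R ^ n) by (pose proof (pow_le R n ltac:(lra)); nra).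
    assert (0 <= INR n) by apply pos_INR.
    assert (0 <= Rabs (P (S n) s t) * R) by (apply Rmult_le_pos; [apply Rabs_pos|lra]).
    assert (Rabs (a (S n)) * (Rabs (P (S n) s t) * R) <= w * (INR (S n) * R ^ S n)).
    { apply Rmult_le_compat; auto. apply Rabs_pos. }
    rewrite !S_INR in *. simpl pow in *.
    assert (w * (INR n + 1) * INR n * R^n <= w * (INR n + 1) * INR n * (R * R^n)).
    { apply Rmult_le_compat_l; auto. repeat apply Rmult_le_pos; lra. }
    assert (0 <= w * (INR n + 1) * (R * R^n)) by (repeat apply Rmult_le_pos; auto; try lra; apply pow_le; lra).
    lra.
Qed.

Lemma DD_bound a n s t R w : 1 <= R -> Rabs s <= R -> Rabs t <= R ->
  (forall k, (k <= n)%nat -> Rabs (a k) <= w) ->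
  Rabs (DD a n s t) <= w * INR (S n) * INR n * R ^ n.
Proof. intros. apply Rle_trans with (Rabs (DD a n s t) * R); [|apply DD_boundR; auto].
  pose proof (Rabs_pos (DD a n s t)). nra. Qed.

Lemma DD_lip a n s s' t t' R w : 1 <= R -> Rabs s <= R -> Rabs s' <= R -> Rabs t <= R -> Rabs t' <= R ->
  (forall k, (k <= n)%nat -> Rabs (a k) <= w) ->
  Rabs (DD a n s t - DD a n s' t') <= w * INR (S n) * INR n * INR n * R ^ n * (Rabs (s - s') + Rabs (t - t')).
Proof. intros HR Hs Hs' Ht Ht' Hw. unfold DD. induction n; [simpl|rewrite !tech5].
  - replace (a 0%nat * 0 - a 0%nat * 0) with 0 by ring. rewrite Rabs_R0. lra.
  - assert (Hw0 : 0 <= w) by (pose proof (Hw 0%nat ltac:(lia)); pose proof (Rabs_pos (a 0%nat)); lra).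
    pose proof (IHn (fun k Hk => Hw k ltac:(lia))) as IH.
    pose proof (P_lip (S n) s s' t t' R HR Hs Hs' Ht Ht') as PL.
    pose proof (Hw (S n) (le_n _)) as HwS.
    set (A := sum_f_R0 (fun k : nat => a k * P k s t) n) in *.
    set (B := sum_f_R0 (fun k : nat => a k * P k s' t') n) in *.
    set (D := Rabs (s - s') + Rabs (t - t')) in *.
    assert (HD : 0 <= D) by (unfold D; pose proof (Rabs_pos (s-s')); pose proof (Rabs_pos (t-t')); lra).
    replace (A + a (S n) * P (S n) s t - (B + a (S n) * P (S n) s' t')) with ((A - B) + a (S n) * (P (S n) s t - P (S n) s' t')) by ring.
    eapply Rle_trans. apply Rabs_triang. rewrite Rabs_mult.
    assert (Rabs (a (S n)) * Rabs (P (S n) s t - P (S n) s' t') <= w * (INR (S n) * INR (S n) * R ^ S n * D)).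
    { apply Rmult_le_compat; auto; apply Rabs_pos. }
    rewrite !S_INR in *. simpl pow in *.
    assert (HRn : 0 <= R ^ n) by (apply pow_le; lra).
    assert (HX : w * R^n * D <= w * (R * R^n) * D).
    { apply Rmult_le_compat_r; auto. apply Rmult_le_compat_l; auto. nra. }
    assert (0 <= INR n) by apply pos_INR.
    assert (w * (INR n + 1) * INR n * INR n * R ^ n * D <= (INR n + 1) * INR n * INR n * (w * (R * R ^ n) * D)).
    { replace (w * (INR n + 1) * INR n * INR n * R ^ n * D) with ((INR n + 1) * INR n * INR n * (w * R ^ n * D)) by ring.
      apply Rmult_le_compat_l; auto. repeat apply Rmult_le_pos; lra. }
    assert (0 <= w * (R * R ^ n) * D) by (repeat apply Rmult_le_pos; nra).
    assert (0 <= (INR n + 1) * (w * (R * R ^ n) * D)) by (apply Rmult_le_pos; lra).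
    assert (0 <= INR n * (INR n + 1) * (w * (R * R ^ n) * D)) by (repeat apply Rmult_le_pos; lra).
    nra.
Qed.


Definition BL (R0 L : R) (G : R -> R -> R) := forall s s' t t',
  Rabs s <= R0 -> Rabs s' <= R0 -> Rabs t <= R0 -> Rabs t' <= R0 ->
  Rabs (G s t - G s' t') <= L * (Rabs (s - s') + Rabs (t - t')).

Lemma lip_cont f x0 L : 0 <= L -> (forall x, Rabs (x - x0) < 1 -> Rabs (f x - f x0) <= L * Rabs (x - x0)) ->
  continuity_pt f x0.
Proof. intros HL H eps Heps. exists (Rmin 1 (eps / (L + 1))). split.
  - apply Rmin_pos. lra. apply Rdiv_lt_0_compat; lra.
  - intros x [_ Hx]. simpl in *. unfold R_dist in *.
    assert (Hx1 : Rabs (x - x0) < 1) by (eapply Rlt_le_trans; [apply Hx|apply Rmin_l]).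
    assert (Hx2 : Rabs (x - x0) < eps / (L + 1)) by (eapply Rlt_le_trans; [apply Hx|apply Rmin_r]).
    eapply Rle_lt_trans. apply H; auto.
    apply Rmult_lt_compat_r with (r := L + 1) in Hx2; [|lra].
    unfold Rdiv in Hx2. rewrite Rmult_assoc, Rinv_l in Hx2 by lra.
    pose proof (Rabs_pos (x - x0)). nra.
Qed.

Lemma abs_box x T : Rabs x <= T <-> -T <= x <= T.
Proof. unfold Rabs; destruct Rcase_abs; split; intros; lra. Qed.

Lemma min2D T L G : 0 <= T -> 0 <= L -> BL (T + 1) L G ->
  (forall s t, Rabs s <= T -> Rabs t <= T -> 0 < G s t) ->
  exists mu, 0 < mu /\ forall s t, Rabs s <= T -> Rabs t <= T -> mu <= G s t.
Proof. intros HT HL HB Hpos.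
  assert (Ex : forall s, exists x, -T <= x <= T /\ (Rabs s <= T + 1 -> forall c, -T <= c <= T -> G s x <= G s c)).
  { intros s. destruct (Rle_dec (Rabs s) (T + 1)) as [Hs|Hs].
    - destruct (continuity_ab_min (G s) (-T) T ltac:(lra)) as [x [H1 H2]].
      + intros c Hc. apply lip_cont with L; auto. intros x Hx.
        replace (Rabs (x - c)) with (Rabs (s - s) + Rabs (x - c)) by (replace (s - s) with 0 by ring; rewrite Rabs_R0; ring).
        apply HB; auto; apply abs_box; revert Hx; unfold Rabs; destruct Rcase_abs; intros; lra.
      + exists x. split; auto.
    - exists 0. split. lra. intros; lra. }
  set (tm := fun s => proj1_sig (constructive_indefinite_description _ (Ex s))).
  assert (Htm : forall s, -T <= tm s <= T /\ (Rabs s <= T + 1 -> forall c, -T <= c <= T -> G s (tm s) <= G s c)).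
  { intros s. unfold tm. destruct (constructive_indefinite_description _ (Ex s)). simpl. auto. }
  set (m := fun s => G s (tm s)).
  destruct (continuity_ab_min m (-T) T ltac:(lra)) as [s0 [H1 H2]].
  - intros c Hc. apply lip_cont with L; auto. intros x Hx.
    assert (Hxb : Rabs x <= T + 1) by (apply abs_box; revert Hx; unfold Rabs; destruct Rcase_abs; intros; lra).
    assert (Hcb : Rabs c <= T + 1) by (apply abs_box; lra).
    destruct (Htm x) as [Hx1 Hx2]. destruct (Htm c) as [Hc1 Hc2].
    assert (Ht1 : Rabs (tm x) <= T + 1) by (apply abs_box; lra).
    assert (Ht2 : Rabs (tm c) <= T + 1) by (apply abs_box; lra).
    pose proof (HB x c (tm c) (tm c) Hxb Hcb Ht2 Ht2) as B1.
    pose proof (HB x c (tm x) (tm x) Hxb Hcb Ht1 Ht1) as B2.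
    replace (tm c - tm c) with 0 in B1 by ring. replace (tm x - tm x) with 0 in B2 by ring.
    rewrite Rabs_R0, Rplus_0_r in B1, B2.
    pose proof (Hx2 Hxb (tm c) Hc1). pose proof (Hc2 Hcb (tm x) Hx1).
    unfold m. revert B1 B2. unfold Rabs at 1 3 5. destruct Rcase_abs; destruct Rcase_abs; destruct Rcase_abs; intros; lra.
  - exists (m s0). split.
    + unfold m. apply Hpos. apply abs_box; lra. apply abs_box; apply Htm.
    + intros s t Hs Ht. apply Rle_trans with (m s).
      apply H1. apply abs_box; auto. unfold m. apply Htm. lra. apply abs_box; auto.
Qed.

Lemma BL_DD a n R0 : 1 <= R0 -> exists L, 0 <= L /\ BL R0 L (DD a n).
Proof. intros HR. set (w := sum_f_R0 (fun i => Rabs (a i)) n).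
  assert (Hw : forall k, (k <= n)%nat -> Rabs (a k) <= w) by (intros; apply coef_le_sum; auto).
  assert (0 <= w) by (apply cond_pos_sum; intros; apply Rabs_pos).
  exists (w * INR (S n) * INR n * INR n * R0 ^ n). split.
  repeat apply Rmult_le_pos; auto; try apply pos_INR. apply pow_le; lra.
  intros s s' t t' ? ? ? ?. apply DD_lip; auto.
Qed.

Lemma BL_plus R0 L1 L2 g1 g2 : BL R0 L1 g1 -> BL R0 L2 g2 -> BL R0 (L1 + L2) (fun s t => g1 s t + g2 s t).
Proof. intros H1 H2 s s' t t' ? ? ? ?.
  replace (g1 s t + g2 s t - (g1 s' t' + g2 s' t')) with ((g1 s t - g1 s' t') + (g2 s t - g2 s' t')) by ring.
  eapply Rle_trans. apply Rabs_triang. rewrite Rmult_plus_distr_r. apply Rplus_le_compat; auto. Qed.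

Lemma BL_sq R0 L g : 0 <= R0 -> 0 <= L -> BL R0 L g -> exists L', 0 <= L' /\ BL R0 L' (fun s t => g s t * g s t).
Proof. intros HR HL H. set (B := Rabs (g 0 0) + L * (2 * R0)).
  assert (HB : forall s t, Rabs s <= R0 -> Rabs t <= R0 -> Rabs (g s t) <= B).
  { intros s t Hs Ht. pose proof (H s 0 t 0 Hs ltac:(rewrite Rabs_R0; lra) Ht ltac:(rewrite Rabs_R0; lra)) as K.
    rewrite !Rminus_0_r in K.
    assert (Rabs (g s t) <= Rabs (g 0 0) + Rabs (g s t - g 0 0)).
    { replace (g s t) with (g 0 0 + (g s t - g 0 0)) at 1 by ring. apply Rabs_triang. }
    unfold B. assert (L * (Rabs s + Rabs t) <= L * (2 * R0)) by (apply Rmult_le_compat_l; lra). lra. }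
  assert (0 <= B) by (unfold B; pose proof (Rabs_pos (g 0 0)); nra).
  exists (2 * B * L). split. nra.
  intros s s' t t' ? ? ? ?.
  replace (g s t * g s t - g s' t' * g s' t') with ((g s t - g s' t') * (g s t + g s' t')) by ring.
  rewrite Rabs_mult.
  assert (Rabs (g s t + g s' t') <= 2 * B).
  { eapply Rle_trans. apply Rabs_triang. pose proof (HB s t). pose proof (HB s' t'). lra. }
  pose proof (H s s' t t' H1 H2 H3 H4).
  pose proof (Rabs_pos (g s t - g s' t')). pose proof (Rabs_pos (g s t + g s' t')).
  replace (2 * B * L * (Rabs (s - s') + Rabs (t - t'))) with ((L * (Rabs (s - s') + Rabs (t - t'))) * (2 * B)) by ring.
  apply Rmult_le_compat; auto.
Qed.

Lemma infinity q j : q (S (2 * j)) <> 0 -> exists T, 1 <= T /\ forall q',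
  (forall k, (k <= S (2 * j))%nat -> Rabs (q' k - q k) < 1) ->
  Rabs (q' (S (2 * j)) - q (S (2 * j))) < Rabs (q (S (2 * j))) / 2 ->
  forall s t, T <= Rmax (Rabs s) (Rabs t) -> DD q' (S (2 * j)) s t <> 0.
Proof. intros Hq. set (m := S (2 * j)) in *.
  set (w := sum_f_R0 (fun i => Rabs (q i)) (2 * j) + 1).
  set (S0 := w * INR (S (2 * j)) * INR (2 * j)).
  assert (Hqm : 0 < Rabs (q m)) by (apply Rabs_pos_lt; auto).
  assert (HS0 : 0 <= S0).
  { unfold S0, w. pose proof (cond_pos_sum (fun i => Rabs (q i)) (2*j) (fun i => Rabs_pos _)).
    repeat apply Rmult_le_pos; try apply pos_INR; lra. }
  exists (Rmax 1 (4 * (S0 + 1) / Rabs (q m))). split. apply Rmax_l.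
  intros q' Hc Hm s t HT Hz.
  set (R := Rmax (Rabs s) (Rabs t)) in *.
  assert (HR1 : 1 <= R) by (eapply Rle_trans; [apply Rmax_l|apply HT]).
  assert (HR2 : 4 * (S0 + 1) / Rabs (q m) <= R) by (eapply Rle_trans; [apply Rmax_r|apply HT]).
  assert (HR3 : 4 * (S0 + 1) <= Rabs (q m) * R).
  { apply Rmult_le_compat_l with (r := Rabs (q m)) in HR2; [|lra].
    unfold Rdiv in HR2. rewrite <- Rmult_assoc, (Rmult_comm (Rabs (q m))), Rmult_assoc, Rinv_r in HR2 by lra. lra. }
  assert (Hw : forall k, (k <= 2 * j)%nat -> Rabs (q' k) <= w).
  { intros k Hk. pose proof (Hc k ltac:(lia)). pose proof (coef_le_sum q (2*j) k Hk).
    assert (Rabs (q' k) <= Rabs (q k) + Rabs (q' k - q k)).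
    { replace (q' k) with (q k + (q' k - q k)) at 1 by ring. apply Rabs_triang. }
    unfold w. lra. }
  pose proof (DD_boundR q' (2 * j) s t R w HR1 (Rmax_l _ _) (Rmax_r _ _) Hw) as B1. fold S0 in B1.
  pose proof (P_odd_lower j s t) as PL. fold R in PL. fold m in PL.
  assert (Hqm' : Rabs (q m) / 2 < Rabs (q' m)).
  { assert (Rabs (q m) <= Rabs (q' m) + Rabs (q' m - q m)).
    { replace (q m) with (q' m - (q' m - q m)) at 1 by ring. eapply Rle_trans. apply Rabs_triang. rewrite Rabs_Ropp. lra. }
    lra. }
  assert (E : DD q' (2 * j) s t = - (q' m * P m s t)).
  { unfold m in *. unfold DD in Hz |- *. rewrite tech5 in Hz. lra. }
  rewrite E, Rabs_Ropp, Rabs_mult in B1.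
  assert (HRj : 0 < R ^ (2 * j)) by (apply pow_lt; lra).
  assert (HP : 0 < P m s t) by lra.
  rewrite (Rabs_pos_eq (P m s t)) in B1 by lra.
  assert (Rabs (q m) / 2 * (R ^ (2 * j) / 2) * R <= Rabs (q' m) * P m s t * R).
  { apply Rmult_le_compat_r. lra. apply Rmult_le_compat; lra. }
  assert ((S0 + 1) * R ^ (2 * j) <= Rabs (q m) / 2 * (R ^ (2 * j) / 2) * R).
  { replace (Rabs (q m) / 2 * (R ^ (2 * j) / 2) * R) with ((Rabs (q m) * R / 4) * R ^ (2 * j)) by field.
    apply Rmult_le_compat_r; lra. }
  nra.
Qed.

Lemma knot_of_DD d a b c :
  (forall s t, ~ (DD a (d - 2) s t = 0 /\ DD b (d - 1) s t = 0 /\ DD c d s t = 0)) -> is_poly_knot d a b c.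
Proof. intros H. split.
  - intros s t E1 E2 E3. destruct (Req_dec s t) as [|Hne]; auto. exfalso. apply (H s t).
    unfold phiX, phiY, phiZ in *.
    pose proof (DD_id a (d-2) s t). pose proof (DD_id b (d-1) s t). pose proof (DD_id c d s t).
    assert (s - t <> 0) by lra.
    repeat split; apply (Rmult_eq_reg_l (s - t)); auto; lra.
  - intros t. exists (DD a (d-2) t t), (DD b (d-1) t t), (DD c d t t).
    split; [apply DD_deriv|]. split; [apply DD_deriv|]. split; [apply DD_deriv|]. apply H.
Qed.

Lemma DD_of_knot d a b c : is_poly_knot d a b c ->
  forall s t, ~ (DD a (d - 2) s t = 0 /\ DD b (d - 1) s t = 0 /\ DD c d s t = 0).
Proof. intros [Hi Hd] s t [E1 [E2 E3]].
  destruct (Req_dec s t) as [<-|Hne].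
  - destruct (Hd s) as [l1 [l2 [l3 [D1 [D2 [D3 N]]]]]]. apply N.
    rewrite (uniqueness_limite _ _ _ _ D1 (DD_deriv a (d-2) s)).
    rewrite (uniqueness_limite _ _ _ _ D2 (DD_deriv b (d-1) s)).
    rewrite (uniqueness_limite _ _ _ _ D3 (DD_deriv c d s)). auto.
  - apply Hne, Hi; unfold phiX, phiY, phiZ.
    + pose proof (DD_id a (d-2) s t). rewrite E1 in H. lra.
    + pose proof (DD_id b (d-1) s t). rewrite E2 in H. lra.
    + pose proof (DD_id c d s t). rewrite E3 in H. lra.
Qed.

Lemma far d a b c : (2 <= d)%nat -> inC d a b c -> exists T e0, 1 <= T /\ 0 < e0 /\
  forall a' b' c', close d e0 a b c a' b' c' ->
  forall s t, T <= Rmax (Rabs s) (Rabs t) -> DD b' (d - 1) s t <> 0 \/ DD c' d s t <> 0.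
Proof. intros Hd [Ha [Hb Hc]].
  destruct (Nat.Even_or_Odd d) as [[j Hj]|[j Hj]].
  - destruct j as [|j]. lia.
    assert (E : (d - 1 = S (2 * j))%nat) by lia. rewrite E in Hb.
    destruct (infinity b j Hb) as [T [HT HI]].
    exists T, (Rmin 1 (Rabs (b (S (2 * j))) / 2)). split; auto. split.
    apply Rmin_pos. lra. pose proof (Rabs_pos_lt _ Hb). lra.
    intros a' b' c' [_ [Cb _]] s t Hst. left. rewrite E. apply (HI b'); auto.
    + intros k Hk. eapply Rlt_le_trans. apply Cb. lia. apply Rmin_l.
    + eapply Rlt_le_trans. apply Cb. lia. apply Rmin_r.
  - assert (E : (d = S (2 * j))%nat) by lia. rewrite E in Hc.
    destruct (infinity c j Hc) as [T [HT HI]].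
    exists T, (Rmin 1 (Rabs (c (S (2 * j))) / 2)). split; auto. split.
    apply Rmin_pos. lra. pose proof (Rabs_pos_lt _ Hc). lra.
    intros a' b' c' [_ [_ Cc]] s t Hst. right. rewrite E. apply (HI c'); auto.
    + intros k Hk. eapply Rlt_le_trans. apply Cc. lia. apply Rmin_l.
    + eapply Rlt_le_trans. apply Cc. lia. apply Rmin_r.
Qed.

Lemma sq3_pos x y z : ~ (x = 0 /\ y = 0 /\ z = 0) -> 0 < x * x + y * y + z * z.
Proof. intros H. destruct (Req_dec x 0); destruct (Req_dec y 0); destruct (Req_dec z 0); try tauto; nra. Qed.

Lemma pert a a' n s t R e : 1 <= R -> Rabs s <= R -> Rabs t <= R -> (forall i, (i <= n)%nat -> Rabs (a' i - a i) < e) ->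
  Rabs (DD a' n s t - DD a n s t) <= e * (INR (S n) * INR n * R ^ n).
Proof. intros. rewrite DD_lin. rewrite <- !Rmult_assoc. apply DD_bound; auto. intros. apply Rlt_le; auto. Qed.

Lemma main_open d a b c : (2 <= d)%nat -> inQ d a b c -> exists eps, 0 < eps /\
  forall a' b' c', close d eps a b c a' b' c' -> inQ d a' b' c'.
Proof. intros Hd [HC HK].
  destruct (far d a b c Hd HC) as [T [e0 [HT [He0 HF]]]].
  set (G := fun s t => DD a (d-2) s t * DD a (d-2) s t + DD b (d-1) s t * DD b (d-1) s t + DD c d s t * DD c d s t).
  assert (HBL : exists L, 0 <= L /\ BL (T + 1) L G).
  { destruct (BL_DD a (d-2) (T+1) ltac:(lra)) as [L1 [H1 B1]].
    destruct (BL_DD b (d-1) (T+1) ltac:(lra)) as [L2 [H2 B2]].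
    destruct (BL_DD c d (T+1) ltac:(lra)) as [L3 [H3 B3]].
    destruct (BL_sq (T+1) _ _ ltac:(lra) H1 B1) as [M1 [K1 C1]].
    destruct (BL_sq (T+1) _ _ ltac:(lra) H2 B2) as [M2 [K2 C2]].
    destruct (BL_sq (T+1) _ _ ltac:(lra) H3 B3) as [M3 [K3 C3]].
    exists (M1 + M2 + M3). split. lra. unfold G. apply BL_plus; [apply BL_plus|]; auto. }
  destruct HBL as [L [HL HBL]].
  destruct (min2D T L G ltac:(lra) HL HBL) as [mu [Hmu HG]].
  { intros s t _ _. unfold G. apply sq3_pos. apply DD_of_knot; auto. }
  set (K := INR (S (d-2)) * INR (d-2) * T ^ (d-2) + INR (S (d-1)) * INR (d-1) * T ^ (d-1) + INR (S d) * INR d * T ^ d).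
  assert (HK0 : 0 <= INR (S (d-2)) * INR (d-2) * T ^ (d-2)) by (repeat apply Rmult_le_pos; try apply pos_INR; apply pow_le; lra).
  assert (HK1 : 0 <= INR (S (d-1)) * INR (d-1) * T ^ (d-1)) by (repeat apply Rmult_le_pos; try apply pos_INR; apply pow_le; lra).
  assert (HK2 : 0 <= INR (S d) * INR d * T ^ d) by (repeat apply Rmult_le_pos; try apply pos_INR; apply pow_le; lra).
  destruct HC as [Ha [Hb Hc]].
  pose proof (Rabs_pos_lt _ Ha). pose proof (Rabs_pos_lt _ Hb). pose proof (Rabs_pos_lt _ Hc).
  set (eps := Rmin e0 (Rmin (Rabs (a (d-2)%nat) / 2) (Rmin (Rabs (b (d-1)%nat) / 2) (Rmin (Rabs (c d) / 2)
                (Rmin (mu / (4 * (K + 1))) (1 / (K + 1))))))).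
  assert (HKk : 0 <= K) by (unfold K; lra). assert (HKp : 0 < K + 1) by lra.
  assert (Heps : 0 < eps).
  { unfold eps. repeat apply Rmin_pos; try lra; apply Rdiv_lt_0_compat; lra. }
  assert (E1 : eps <= e0) by apply Rmin_l.
  assert (E2 : eps <= Rabs (a (d-2)%nat) / 2) by (unfold eps; do 1 (eapply Rle_trans; [apply Rmin_r|]); apply Rmin_l).
  assert (E3 : eps <= Rabs (b (d-1)%nat) / 2) by (unfold eps; do 2 (eapply Rle_trans; [apply Rmin_r|]); apply Rmin_l).
  assert (E4 : eps <= Rabs (c d) / 2) by (unfold eps; do 3 (eapply Rle_trans; [apply Rmin_r|]); apply Rmin_l).
  assert (E5 : eps <= mu / (4 * (K + 1))) by (unfold eps; do 4 (eapply Rle_trans; [apply Rmin_r|]); apply Rmin_l).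
  assert (E6 : eps <= 1 / (K + 1)) by (unfold eps; do 5 (eapply Rle_trans; [apply Rmin_r|]); apply Rle_refl).
  assert (EK1 : eps * K <= mu / 4).
  { apply Rle_trans with (mu / (4 * (K + 1)) * K). apply Rmult_le_compat_r; lra.
    unfold Rdiv. rewrite Rinv_mult. assert (0 < / (K + 1)) by (apply Rinv_0_lt_compat; lra).
    assert (/ (K + 1) * K <= 1). { apply Rmult_le_reg_l with (K + 1). lra. rewrite <- Rmult_assoc, Rinv_r by lra. lra. }
    nra. }
  assert (EK2 : eps * K <= 1).
  { apply Rle_trans with (1 / (K + 1) * K). apply Rmult_le_compat_r; lra.
    unfold Rdiv. rewrite Rmult_1_l. apply Rmult_le_reg_l with (K + 1). lra. rewrite <- Rmult_assoc, Rinv_r by lra. lra. }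
  exists eps. split; auto.
  intros a' b' c' Hcl. destruct Hcl as [Ca [Cb Cc]].
  assert (Hcl0 : close d e0 a b c a' b' c').
  { repeat split; intros; eapply Rlt_le_trans; eauto. }
  split.
  - assert (L1 : forall (u u' : R), Rabs (u' - u) < Rabs u / 2 -> u' <> 0).
    { intros u u' H' ->. rewrite Rminus_0_l, Rabs_Ropp in H'. pose proof (Rabs_pos u). lra. }
    repeat split.
    + apply (L1 (a (d-2)%nat)). eapply Rlt_le_trans. apply Ca. lia. auto.
    + apply (L1 (b (d-1)%nat)). eapply Rlt_le_trans. apply Cb. lia. auto.
    + apply (L1 (c d)). eapply Rlt_le_trans. apply Cc. lia. auto.
  - apply knot_of_DD. intros s t [Z1 [Z2 Z3]].
    destruct (Rle_dec T (Rmax (Rabs s) (Rabs t))) as [Hf|Hn].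
    + destruct (HF a' b' c' Hcl0 s t Hf); auto.
    + assert (Hs : Rabs s <= T) by (pose proof (Rmax_l (Rabs s) (Rabs t)); lra).
      assert (Ht : Rabs t <= T) by (pose proof (Rmax_r (Rabs s) (Rabs t)); lra).
      pose proof (HG s t Hs Ht) as Hm. unfold G in Hm.
      pose proof (pert a a' (d-2) s t T eps HT Hs Ht Ca) as P1.
      pose proof (pert b b' (d-1) s t T eps HT Hs Ht Cb) as P2.
      pose proof (pert c c' d s t T eps HT Hs Ht Cc) as P3.
      rewrite Z1, Rminus_0_l, Rabs_Ropp in P1.
      rewrite Z2, Rminus_0_l, Rabs_Ropp in P2.
      rewrite Z3, Rminus_0_l, Rabs_Ropp in P3.
      set (x := DD a (d-2) s t) in *. set (y := DD b (d-1) s t) in *. set (z := DD c d s t) in *.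
      assert (Q : forall (u B : R), Rabs u <= eps * B -> 0 <= B -> B <= K -> u * u <= mu / 4).
      { intros u B Hu HB0 HBK. assert (Rabs u <= eps * K) by (eapply Rle_trans; [apply Hu|]; apply Rmult_le_compat_l; lra).
        assert (Eu : u * u = Rabs u * Rabs u) by (rewrite <- Rabs_mult; symmetry; apply Rabs_pos_eq; nra).
        rewrite Eu. pose proof (Rabs_pos u). assert (0 <= eps * K) by nra. nra. }
      assert (x * x <= mu / 4) by (apply (Q x _ P1); unfold K; lra).
      assert (y * y <= mu / 4) by (apply (Q y _ P2); unfold K; lra).
      assert (z * z <= mu / 4) by (apply (Q z _ P3); unfold K; lra).
      lra.
Qed.

Theorem mainTheorem11 : forall d : nat, (2 <= d)%nat ->
  (forall a b c : nat -> R, inQ d a b c ->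
     exists eps : R, 0 < eps /\
       forall a' b' c' : nat -> R, inC d a' b' c' ->
         close d eps a b c a' b' c' -> inQ d a' b' c') /\
  (forall a b c : nat -> R, inQ d a b c ->
     exists eps : R, 0 < eps /\
       forall a' b' c' : nat -> R,
         close d eps a b c a' b' c' -> inQ d a' b' c').
Proof. intros d Hd. split.
  - intros a b c H. destruct (main_open d a b c Hd H) as [e [He Hm]]. exists e. split; auto.
  - intros a b c H. apply main_open; auto.
Qed.
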